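(* Let $\mathcal{D}$ be an admissible set of domains on a topological space $X$. Then the partially ordered commutative ring $\mathscr{C}_\approx(\mathcal{D})$ is strongly localizable.
   Context: An admissible set of domains on $X$ is a set $\mathcal{D}$ of open subsets of $X$ with $X\in\mathcal{D}$ and $A\cap B\in\mathcal{D}$ for all $A,B\in\mathcal{D}$. On $\bigcup_{A\in\mathcal{D}}\mathscr{C}(A)$ ($\mathscr{C}(A)$ = continuous real-valued functions on $A$) define $f+g$ and $fg$ pointwise on $\operatorname{dom}f\cap\operatorname{dom}g$; $f\approx g$ iff there is $A\in\mathcal{D}$ with $A\subseteq\operatorname{dom}f\cap\operatorname{dom}g$ and $f|_A=g|_A$. $\mathscr{C}_\approx(\mathcal{D})$ is the quotient commutative ring, with order $[f]\le[g]$ iff there is $A\in\mathcal{D}$, $A\subseteq\operatorname{dom}f\cap\operatorname{dom}g$, with $f|_A\le g|_A$ pointwise. For a commutative ring $R$ with translation-invariant partial order and positive cone $R^+$: $\mathrm{Loc}(R)$ is the set of $s\in1+R^+$ such that $rs\in R^+$ implies $r\in R^+$ for all $r\in R$; $R$ is strongly localizable if $r^2\in R^+$ for all $r$ and $\mathrm{Loc}(R)=1+R^+$. *)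

(* Defs.v *)
From HB Require Import structures.
From mathcomp Require Import all_boot all_order all_algebra.
From mathcomp Require Import all_classical all_reals.
From mathcomp Require Import topology Rstruct Rstruct_topology.
From Stdlib Require Import Reals.
Set Implicit Arguments. Unset Strict Implicit. Unset Printing Implicit Defensive.
Import Order.TTheory GRing.Theory Num.Theory.
Local Open Scope classical_set_scope.
Local Open Scope ring_scope.

Definition admissible (X : topologicalType) (D : set (set X)) : Prop :=
  (forall A, D A -> open A) /\ D setT /\
  (forall A B, D A -> D B -> D (A `&` B)).

(* A partial function: a domain together with a (total) function;
   only its values on the domain matter. *)
Record pfun (X : Type) := PFun { pdom : set X; pfn : X -> Rdefinitions.R }.

(* f is an element of  \bigcup_{A in D} C(A). *)
Definition inC (X : topologicalType) (D : set (set X)) (f : pfun X) : Prop :=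
  D (pdom f) /\ {within pdom f, continuous (pfn f)}.

Definition padd X (f g : pfun X) : pfun X :=
  PFun (pdom f `&` pdom g) (fun x => pfn f x + pfn g x).
Definition pmul X (f g : pfun X) : pfun X :=
  PFun (pdom f `&` pdom g) (fun x => pfn f x * pfn g x).
Definition pconst X (c : Rdefinitions.R) : pfun X := PFun setT (fun _ => c).

Definition peqv X (D : set (set X)) (f g : pfun X) : Prop :=
  exists A, D A /\ A `<=` pdom f `&` pdom g /\ (forall x, A x -> pfn f x = pfn g x).

Definition ple X (D : set (set X)) (f g : pfun X) : Prop :=
  exists A, D A /\ A `<=` pdom f `&` pdom g /\ (forall x, A x -> pfn f x <= pfn g x).

Definition ppos (X : topologicalType) (D : set (set X)) (r : pfun X) : Prop := ple D (pconst X 0) r.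

Definition one_plus_pos (X : topologicalType) (D : set (set X)) (s : pfun X) : Prop :=
  exists p, inC D p /\ ppos D p /\ peqv D s (padd (pconst X 1) p).

Definition inLoc (X : topologicalType) (D : set (set X)) (s : pfun X) : Prop :=
  one_plus_pos D s /\
  (forall r, inC D r -> ppos D (pmul r s) -> ppos D r).

Definition strongly_localizable (X : topologicalType) (D : set (set X)) : Prop :=
  (forall r, inC D r -> ppos D (pmul r r)) /\
  (forall s, inC D s -> (inLoc D s <-> one_plus_pos D s)).

(* Main.v *)
Require Import Defs.
From mathcomp Require Import all_classical all_reals topology Rstruct.
From mathcomp Require Import all_boot all_order all_algebra.
Import Order.TTheory GRing.Theory Num.Theory.
Local Open Scope classical_set_scope.
Local Open Scope ring_scope.

Lemma IZR0E : Rdefinitions.IZR BinNums.Z0 = (0 : Rdefinitions.R).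
Proof. reflexivity. Qed.
Lemma IZR1E : Rdefinitions.IZR (BinNums.Zpos 1%AC) = (1 : Rdefinitions.R).
Proof. reflexivity. Qed.

Theorem proposition10 (X : topologicalType) (D : set (set X)) :
  admissible D -> strongly_localizable D.
Proof.
move=> [_ [DT DI]]; split.
  move=> r [Dr _]; exists (pdom r); split => //; split.
    by move=> x rx; split => //.
  move=> x _ /=; rewrite IZR0E; rewrite -expr2; exact: sqr_ge0.
move=> s _; split; first by case.
move=> hs; split => //.
move=> r _ [E [DE [sE hE]]].
case: hs => p [_ [[B [DB [sB hB]]] [A [DA [sA hA]]]]].
exists (A `&` B `&` E); split; first exact: (DI _ _ (DI _ _ DA DB) DE).
split.
  move=> x [[_ _] Ex]; split => //; by case: (sE x Ex) => _ [].
move=> x [[Ax Bx] Ex] /=.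
have := hE x Ex; have := hA x Ax; have := hB x Bx => /=.
rewrite IZR0E IZR1E.
move=> p0 -> h.
have pos : 0 < 1 + pfn p x by apply: (lt_le_trans ltr01); rewrite lerDl.
by rewrite -(pmulr_lge0 _ pos).
Qed.
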